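(* Let $p$ be an odd prime, $\mathcal O$ the ring of integers of a finite extension of $\mathbb Q_p$, and integers $0\le s\le r\le g$. Then (1) $\mathrm{Fil}^{r,s}(V_g(\mathcal O))$ is stable under the action of $S_0(p)$; (2) there is an isomorphism of $S_0(p)$-modules $$\mathrm{Fil}^{r,s}(V_g(\mathcal O))/\mathrm{Fil}^{r,s+1}(V_g(\mathcal O))\cong\big(\mathcal O/p\mathcal O(a^{g-2r+2s})\big)(r-s),$$ and this quotient is generated by the image of the monomial $p^sX^{r-s}Y^{g-r+s}$.
   Context: $V_g(\mathcal O)$: homogeneous degree-$g$ polynomials in $X,Y$ over $\mathcal O$, with right action $(P|\gamma)(X,Y)=P(dX-cY,-bX+aY)$ for $\gamma=\begin{pmatrix}a&b\\c&d\end{pmatrix}$. $S_0(p)=\{\begin{pmatrix}a&b\\c&d\end{pmatrix}\in M_2(\mathbb Z):ad-bc\ne0,\ p\mid c,\ p\nmid a\}$. $\mathrm{Fil}^r=\mathrm{Fil}^r(V_g(\mathcal O))=\{\sum_{j=0}^gb_jX^jY^{g-j}:p^{r-j}\mid b_j\text{ for }0\le j\le r-1\}$, and for $0\le s\le r+1$, $\mathrm{Fil}^{r,s}=\{\sum b_jX^jY^{g-j}\in\mathrm{Fil}^r:p^{r-j+1}\mid b_j\text{ for }r+1-s\le j\le r\}$ (so $\mathrm{Fil}^{r,0}=\mathrm{Fil}^r$ and $\mathrm{Fil}^{r,r+1}=\mathrm{Fil}^{r+1}$). $\big(\mathcal O/p\mathcal O(a^j)\big)(m)$ denotes $\mathcal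 O/p\mathcal O$ on which $\gamma=\begin{pmatrix}a&b\\c&d\end{pmatrix}\in S_0(p)$ acts by multiplication by $\det(\gamma)^m a^j$. *)

(* Defs.v *)
From HB Require Import structures.
From mathcomp Require Import all_boot all_order all_algebra.
From mathcomp.multinomials Require Import mpoly.
Set Implicit Arguments. Unset Strict Implicit. Unset Printing Implicit Defensive.
Import Order.TTheory GRing.Theory Num.Theory.
Local Open Scope ring_scope.

(* Q_p and its finite extensions are not available in the libraries; we    *)
(* characterize "O is the ring of integers of a finite extension of Q_p"   *)
(* by the standard intrinsic description: O is a complete discrete         *)
(* valuation ring of characteristic 0, with finite residue field, whose    *)
Definition pdiv_O {O : comNzRingType} (x y : O) : Prop := exists z, y = x * z.

Definition is_ring_of_integers_padic (p : nat) (O : idomainType) : Prop :=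
  exists pi : O,
    (* pi is a uniformizer: non-zero non-unit, and every non-zero element
       is a unit times a power of pi (so O is a DVR) *)
    [/\ pi != 0 /\ pi \isn't a GRing.unit,
        (forall x : O, x != 0 ->
           exists (n : nat) (u : O), u \is a GRing.unit /\ x = u * pi ^+ n),
        (forall n : nat, (0 < n)%N -> n%:R != 0 :> O) /\
        (* residue characteristic p *)
        pdiv_O pi (p%:R),
        (* finite residue field *)
        (exists s : seq O, forall x : O, exists2 y, y \in s & pdiv_O pi (x - y))
      & (* completeness for the pi-adic topology *)
        (forall u : nat -> O,
           (forall k : nat, exists N : nat, forall m n : nat, (N <= m)%N -> (N <= n)%N ->
               pdiv_O (pi ^+ k) (u m - u n)) ->
           exists l : O, forall k : nat, exists N : nat, forall n : nat, (N <= n)%N ->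
               pdiv_O (pi ^+ k) (u n - l))].

(* V_g(O): homogeneous polynomials of degree g in X = 'X_0, Y = 'X_1.      *)
Definition mXY (j k : nat) : 'X_{1..2} := [multinom [tuple j; k]].

Definition monXY (O : comNzRingType) (j k : nat) : {mpoly O[2]} := 'X_[mXY j k].

Definition coefXY (O : comNzRingType) (g j : nat) (P : {mpoly O[2]}) : O :=
  P@_(mXY j (g - j)).

Definition inV (O : comNzRingType) (g : nat) (P : {mpoly O[2]}) : Prop :=
  P \is g.-homog.

Definition pdivs (O : comNzRingType) (p : nat) (k : nat) (x : O) : Prop :=
  pdiv_O ((p%:R : O) ^+ k) x.

Definition Fil (O : comNzRingType) (p g r : nat) (P : {mpoly O[2]}) : Prop :=
  inV g P /\ forall j : nat, (j < r)%N -> pdivs p (r - j) (coefXY g j P).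

Definition Filrs (O : comNzRingType) (p g r s : nat) (P : {mpoly O[2]}) : Prop :=
  Fil p g r P /\
  forall j : nat, (r.+1 - s <= j)%N -> (j <= r)%N -> pdivs p (r - j).+1 (coefXY g j P).

Definition S0 (p : nat) (gam : 'M[int]_2) : Prop :=
  let a : int := gam 0 0 in let c : int := gam 1 0 in
  [/\ \det gam != 0, (p%:Z %| c)%Z & ~~ (p%:Z %| a)%Z].

Definition act (O : comNzRingType) (gam : 'M[int]_2) (P : {mpoly O[2]}) : {mpoly O[2]} :=
  let a : O := (gam 0 0)%:~R in let b : O := (gam 0 1)%:~R in
  let c : O := (gam 1 0)%:~R in let d : O := (gam 1 1)%:~R in
  P \mPo [tuple d *: 'X_0 - c *: 'X_1 ; - (b *: 'X_0) + a *: 'X_1].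

(* The character gam |-> det(gam)^m a^j of S_0(p) on O/pO, with j : int.
   Its value is computed in F_p (a is invertible mod p since p does not
   divide a); the representative in {0,..,p-1} is then cast into O, which
   is a well-defined element of O/pO. *)
Definition chi_val (p : nat) (m : nat) (j : int) (gam : 'M[int]_2) : nat :=
  nat_of_ord (((\det gam)%:~R : 'F_p) ^+ m * ((gam 0 0)%:~R : 'F_p) ^ j).

Definition congp (O : comNzRingType) (p : nat) (x y : O) : Prop := pdivs p 1 (x - y).

(* Main.v *)
Require Import Defs.
From HB Require Import structures.
From mathcomp Require Import all_boot all_order all_algebra.
From mathcomp.multinomials Require Import mpoly.
From mathcomp Require Import zify ring.
From Stdlib Require Import ClassicalEpsilon.
Import Order.TTheory GRing.Theory Num.Theory.
Set Implicit Arguments. Unset Strict Implicit. Unset Printing Implicit Defensive.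
Local Open Scope ring_scope.
Lemma pd0 (O : comNzRingType) p k : pdivs p k (0 : O).
Proof. by exists 0; rewrite mulr0. Qed.

Lemma pd_any (O : comNzRingType) p (x : O) : pdivs p 0 x.
Proof. by exists x; rewrite expr0 mul1r. Qed.

Lemma pdD (O : comNzRingType) p k (x y : O) :
  pdivs p k x -> pdivs p k y -> pdivs p k (x + y).
Proof. by move=> [a ->] [b ->]; exists (a + b); rewrite mulrDr. Qed.

Lemma pdN (O : comNzRingType) p k (x : O) : pdivs p k x -> pdivs p k (- x).
Proof. by move=> [a ->]; exists (- a); rewrite mulrN. Qed.

Lemma pdB (O : comNzRingType) p k (x y : O) :
  pdivs p k x -> pdivs p k y -> pdivs p k (x - y).
Proof. by move=> hx hy; apply: pdD => //; apply: pdN. Qed.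

Lemma pdMl (O : comNzRingType) p k (c x : O) : pdivs p k x -> pdivs p k (c * x).
Proof. by move=> [a ->]; exists (c * a); rewrite mulrCA. Qed.

Lemma pdMr (O : comNzRingType) p k (c x : O) : pdivs p k x -> pdivs p k (x * c).
Proof. by move=> h; rewrite mulrC; apply: pdMl. Qed.

Lemma pdM (O : comNzRingType) p a b (x y : O) :
  pdivs p a x -> pdivs p b y -> pdivs p (a + b) (x * y).
Proof.
move=> [u ->] [v ->]; exists (u * v); rewrite exprD.
by rewrite mulrACA.
Qed.

Lemma pdW (O : comNzRingType) p j k (x : O) : (j <= k)%N -> pdivs p k x -> pdivs p j x.
Proof.
move=> le [a ->]; exists ((p%:R) ^+ (k - j) * a).
by rewrite mulrA -exprD subnKC.
Qed.

Lemma pd_sum (O : comNzRingType) p k (I : Type) (r : seq I) (P : pred I) (F : I -> O) :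
  (forall i, P i -> pdivs p k (F i)) -> pdivs p k (\sum_(i <- r | P i) F i).
Proof.
move=> h; apply: (big_ind (pdivs p k)); first exact: pd0.
- exact: pdD.
- exact: h.
Qed.

Lemma pd_pow (O : comNzRingType) p k : pdivs p k ((p%:R : O) ^+ k).
Proof. by exists 1; rewrite mulr1. Qed.

Definition Dw (O : comNzRingType) p (w : nat -> nat) (Q : {mpoly O[2]}) :=
  forall m : 'X_{1..2}, pdivs p (w (m ord0)) Q@_m.
Arguments Dw {O} p w Q.

Lemma Dw0 (O : comNzRingType) p w : Dw p w (0 : {mpoly O[2]}).
Proof. by move=> m; rewrite mcoeff0; apply: pd0. Qed.

Lemma DwD (O : comNzRingType) p w (P Q : {mpoly O[2]}) :
  Dw p w P -> Dw p w Q -> Dw p w (P + Q).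
Proof. by move=> hP hQ m; rewrite mcoeffD; apply: pdD. Qed.

Lemma DwN (O : comNzRingType) p w (P : {mpoly O[2]}) :
  Dw p w P -> Dw p w (- P).
Proof. by move=> hP m; rewrite mcoeffN; apply: pdN. Qed.

Lemma DwB (O : comNzRingType) p w (P Q : {mpoly O[2]}) :
  Dw p w P -> Dw p w Q -> Dw p w (P - Q).
Proof. by move=> hP hQ; apply: DwD => //; apply: DwN. Qed.

Lemma DwZ (O : comNzRingType) p w c (P : {mpoly O[2]}) :
  Dw p w P -> Dw p w (c *: P).
Proof. by move=> hP m; rewrite mcoeffZ; apply: pdMl. Qed.

Lemma DwZp (O : comNzRingType) p w v c (P : {mpoly O[2]}) :
  pdivs p v c -> Dw p w P -> Dw p (fun i => v + w i)%N (c *: P).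
Proof. by move=> hc hP m; rewrite mcoeffZ; apply: pdM. Qed.

Lemma DwW (O : comNzRingType) p w w' (P : {mpoly O[2]}) :
  (forall i, w' i <= w i)%N -> Dw p w P -> Dw p w' P.
Proof. by move=> le hP m; apply: pdW (hP m). Qed.

Lemma Dw_any (O : comNzRingType) p (P : {mpoly O[2]}) : Dw p (fun _ => 0%N) P.
Proof. by move=> m; apply: pd_any. Qed.

Lemma Dw_sum (O : comNzRingType) p w (I : Type) (r : seq I) (P : pred I) (F : I -> {mpoly O[2]}) :
  (forall i, P i -> Dw p w (F i)) -> Dw p w (\sum_(i <- r | P i) F i).
Proof.
move=> h; apply: (big_ind (Dw p w)); first exact: Dw0.
- exact: DwD.
- exact: h.
Qed.

Lemma DwM (O : comNzRingType) p w w1 w2 (P Q : {mpoly O[2]}) :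
  (forall i j, w (i + j) <= w1 i + w2 j)%N ->
  Dw p w1 P -> Dw p w2 Q -> Dw p w (P * Q).
Proof.
move=> le hP hQ m; rewrite mcoeffM; apply: pd_sum => k /eqP E.
have -> : m ord0 = (k.1 ord0 + k.2 ord0)%N 
  by have := congr1 (fun x : 'X_{1..2} => x ord0) E; rewrite mnmDE.
 apply: pdW (le _ _) _; exact: pdM.
Qed.
Definition wt (r s j : nat) : nat :=
  (if j <= r then (if r.+1 - s <= j then (r - j).+1 else r - j) else 0)%N.

Lemma wt_le r s j k : (wt r s k <= wt r s j + (j - k))%N.
Proof.
rewrite /wt; case: (leqP k r) => hk; case: (leqP j r) => hj;
  try case: (leqP (r.+1 - s) k) => h1; try case: (leqP (r.+1 - s) j) => h2; lia.
Qed.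

Lemma mXY0 j k : mXY j k ord0 = j. Proof. by []. Qed.
Lemma mXY1 j k : mXY j k ord_max = k. Proof. by []. Qed.

Lemma mXY_eta (m : 'X_{1..2}) : m = mXY (m ord0) (m ord_max).
Proof.
apply/mnmP => -[[|[|i]] Hi] //=.
- by rewrite (_ : Ordinal Hi = ord0) //; apply: val_inj.
- by rewrite (_ : Ordinal Hi = ord_max) //; apply: val_inj.
Qed.

Lemma mdeg2 (m : 'X_{1..2}) : mdeg m = (m ord0 + m ord_max)%N.
Proof.
rewrite mdegE big_ord_recl big_ord_recl big_ord0 addn0.
by congr (_ + m _)%N; apply: val_inj.
Qed.

Lemma mXY_deg j k : mdeg (mXY j k) = (j + k)%N.
Proof. by rewrite mdeg2. Qed.

Lemma mXY_eq j k j' k' : (mXY j k == mXY j' k') = (j == j') && (k == k').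
Proof.
apply/eqP/andP => [E|[/eqP -> /eqP ->] //].
by split; apply/eqP; [move: (congr1 (fun m : 'X_{1..2} => m ord0) E) | move: (congr1 (fun m : 'X_{1..2} => m ord_max) E)].
Qed.

Lemma supp_mXY (O : comNzRingType) g (P : {mpoly O[2]}) (m : 'X_{1..2}) :
  P \is g.-homog -> P@_m != 0 -> m = mXY (m ord0) (g - m ord0) /\ (m ord0 <= g)%N.
Proof.
move=> /dhomogP hom nz.
have : mdeg m = g by apply: hom; rewrite mcoeff_msupp.
rewrite mdeg2 => E; split; last lia.
by rewrite {1}(mXY_eta m); congr mXY; lia.
Qed.

Lemma Filrs_Dw (O : comNzRingType) p g r s (P : {mpoly O[2]}) :
  Filrs p g r s P <-> P \is g.-homog /\ Dw p (wt r s) P.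
Proof.
split.
- move=> [[hom h1] h2]; split => // m.
  have [z|nz] := eqVneq P@_m 0; first by rewrite z; apply: pd0.
  have [E hg] := supp_mXY hom nz.
  set j := m ord0 in E hg *.
  have -> : P@_m = coefXY g j P by rewrite /coefXY -E.
  rewrite /wt; case: (leqP j r) => hj; last exact: pd_any.
  case: (leqP (r.+1 - s) j) => hs; first exact: h2.
  have [jr|] := ltnP j r; first exact: h1.
  move=> rj; have -> : (r - j = 0)%N by lia.
  exact: pd_any.
- move=> [hom hD]; split; first split => //.
  + move=> j jr; have := hD (mXY j (g - j)); rewrite mXY0 => h.
    apply: pdW h; rewrite /wt; case: (leqP j r); case: (leqP (r.+1 - s) j); lia.
  + move=> j h1 h2; have := hD (mXY j (g - j)); rewrite mXY0 => h.
    apply: pdW h; rewrite /wt; case: (leqP j r); case: (leqP (r.+1 - s) j); lia.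
Qed.
Lemma pd_int (O : comNzRingType) p (c : int) : (p%:Z %| c)%Z -> pdivs p 1 (c%:~R : O).
Proof.
case/dvdzP => q ->; exists (q%:~R); rewrite expr1 intrM mulrC.
by congr (_ * _); rewrite -pmulrn.
Qed.

Lemma Dw_X0 (O : comNzRingType) p (x : O) : Dw p (fun i => 1 - i)%N (x *: 'X_0).
Proof.
move=> m; rewrite mcoeffZ mcoeffX.
case: (posnP (m ord0)) => h; last first.
  by rewrite (_ : (1 - m ord0 = 0)%N); [exact: pd_any | lia].
case: eqP => [E|_]; last by rewrite mulr0; apply: pd0.
by move: h; rewrite -E mnm1E.
Qed.

Lemma Dw_Xc (O : comNzRingType) p (c : O) i : pdivs p 1 c -> Dw p (fun _ => 1)%N (c *: 'X_i).
Proof. by move=> h m; rewrite mcoeffZ; apply: pdMr. Qed.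

Lemma Dw_L1 (O : comNzRingType) p (c d : O) : pdivs p 1 c ->
  Dw p (fun i => 1 - i)%N (d *: 'X_0 - c *: 'X_1).
Proof.
move=> hc; apply: DwB; first exact: Dw_X0.
by apply: DwW (Dw_Xc 1 hc) => i; lia.
Qed.

Lemma Dw_L1n (O : comNzRingType) p (L : {mpoly O[2]}) n :
  Dw p (fun i => 1 - i)%N L -> Dw p (fun i => n - i)%N (L ^+ n).
Proof.
move=> hL; elim: n => [|n IH].
  by rewrite expr0; apply: DwW (Dw_any p 1) => i; lia.
by rewrite exprS; apply: DwM hL IH => i j; lia.
Qed.

Lemma act_expand (O : comNzRingType) (gam : 'M[int]_2) (P : {mpoly O[2]}) :
  act gam P = \sum_(m <- msupp P) P@_m *:
     (((gam 1 1)%:~R *: 'X_0 - (gam 1 0)%:~R *: 'X_1) ^+ m ord0 *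
      (- ((gam 0 1)%:~R *: 'X_0) + (gam 0 0)%:~R *: 'X_1) ^+ m ord_max).
Proof.
rewrite /act comp_mpolyEX; apply: eq_bigr => m _; congr (_ *: _).
rewrite comp_mpolyX !big_ord_recl big_ord0 mulr1.
by congr (_ * _ ^+ m _); apply: val_inj.
Qed.

Lemma homog_XZ (O : comNzRingType) (x : O) i : (x *: 'X_i : {mpoly O[2]}) \is 1.-homog.
Proof. by apply: dhomogZ; rewrite dhomogX; apply/eqP; exact: mdeg1. Qed.

Lemma homog_L (O : comNzRingType) (x y : O) : (x *: 'X_0 + y *: 'X_1 : {mpoly O[2]}) \is 1.-homog.
Proof. apply: dhomogD; apply: dhomogZ; rewrite dhomogX; apply/eqP; exact: mdeg1. Qed.

Lemma act_homog (O : comNzRingType) (gam : 'M[int]_2) g (P : {mpoly O[2]}) :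
  P \is g.-homog -> act gam P \is g.-homog.
Proof.
move=> /dhomogP hom; rewrite act_expand big_seq.
apply: (big_ind (fun Q : {mpoly O[2]} => Q \is g.-homog)).
- exact: dhomog0.
- exact: dhomogD.
move=> m /hom E; have {}E : mdeg m = g := E; move: E; rewrite mdeg2 => <-; apply: dhomogZ.
have -> : (m ord0 + m ord_max = 1 * m ord0 + 1 * m ord_max)%N by rewrite !mul1n.
apply: dhomogM; apply: dhomogMn.
  by apply: dhomogD; [exact: homog_XZ | rewrite dhomogN; exact: homog_XZ].
by apply: dhomogD; [rewrite dhomogN; exact: homog_XZ | exact: homog_XZ].
Qed.

Lemma act_Dw (O : comNzRingType) p (gam : 'M[int]_2) r s (P : {mpoly O[2]}) :
  S0 p gam -> Dw p (wt r s) P -> Dw p (wt r s) (act gam P).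
Proof.
move=> [_ hc _] hP; rewrite act_expand; apply: Dw_sum => m _.
have h1 := Dw_L1n (m ord0) (Dw_L1 ((gam 1 1)%:~R) (pd_int O hc)).
set L2 : {mpoly O[2]} := (- ((gam 0 1)%:~R *: 'X_0) + (gam 0 0)%:~R *: 'X_1) ^+ m ord_max.
have h2 := (DwM (w := fun k => (m ord0 - k)%N) (w1 := fun k => (m ord0 - k)%N)
   (w2 := fun _ => 0%N) ltac:(move=> *; lia) h1 (Dw_any p L2)).
have h3 := DwZp (hP m) h2.
by apply: DwW h3 => i; apply: wt_le.
Qed.

Lemma act_Filrs (O : comNzRingType) p g (gam : 'M[int]_2) r s (P : {mpoly O[2]}) :
  S0 p gam -> Filrs p g r s P -> Filrs p g r s (act gam P).
Proof.
move=> hS /Filrs_Dw [hom hD]; apply/Filrs_Dw; split.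
  exact: act_homog.
exact: act_Dw.
Qed.
Lemma det2 (R : comNzRingType) (M : 'M[R]_2) : \det M = M 0 0 * M 1 1 - M 0 1 * M 1 0.
Proof.
rewrite (expand_det_row _ 0) !big_ord_recl big_ord0 addr0 /cofactor !det_mx11 /=.
rewrite !mxE /= expr0 expr1 mul1r mulN1r mulrN.
by congr (M _ _ * M _ _ - M _ _ * M _ _); apply: val_inj.
Qed.

Lemma Fp_int0 p (z : int) : prime p -> (z%:~R : 'F_p) = 0 -> (p%:Z %| z)%Z.
Proof.
move=> pp; rewrite dvdzE /=; case: z => n /=.
  by move=> /eqP; rewrite -(dvdn_pcharf (pchar_Fp pp)).
by rewrite NegzE mulrNz => /eqP; rewrite oppr_eq0 -(dvdn_pcharf (pchar_Fp pp)).
Qed.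

Lemma chi_cong (O : comNzRingType) p (gam : 'M[int]_2) g r s :
  prime p -> S0 p gam -> (s <= r)%N -> (r <= g)%N ->
  pdivs p 1 ((chi_val p (r - s) (g%:Z - 2 * r%:Z + 2 * s%:Z) gam)%:R -
             ((gam 1 1)%:~R ^+ (r - s) * (gam 0 0)%:~R ^+ (g - r + s) : O)).
Proof.
move=> pp [_ hc ha] sr rg.
have cF : ((gam 1 0)%:~R : 'F_p) = 0.
  by case/dvdzP: hc => q ->; rewrite intrM -pmulrn pchar_Fp_0 // mulr0.
have aF : ((gam 0 0)%:~R : 'F_p) != 0 by apply/eqP => /(Fp_int0 pp); apply/negP.
set a := gam 0 0; set b := gam 0 1; set c := gam 1 0; set d := gam 1 1.
set N : int := d ^+ (r - s) * a ^+ (g - r + s).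
have vE : (((\det gam)%:~R : 'F_p) ^+ (r - s) * (a%:~R : 'F_p) ^ (g%:Z - 2 * r%:Z + 2 * s%:Z))
          = N%:~R.
  rewrite det2 intrB !intrM cF mulr0 subr0 exprMn -mulrA.
  have -> : (a%:~R : 'F_p) ^+ (r - s) = (a%:~R : 'F_p) ^ ((r - s)%N : int) by [].
  rewrite mulrCA -expfzDr //.
  have -> : (((r - s)%N : int) + (g%:Z - 2 * r%:Z + 2 * s%:Z) = (g - r + s)%N :> int) by lia.
  by rewrite !rmorphXn.
set v := (_ * _ : 'F_p) in vE.
have hv : (((chi_val p (r - s) (g%:Z - 2 * r%:Z + 2 * s%:Z) gam)%:Z - N)%:~R : 'F_p) = 0.
  rewrite intrB -vE /chi_val -/v.
  by apply/eqP; rewrite subr_eq0; apply/eqP; exact: natr_Zp.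
have := pd_int O (Fp_int0 pp hv).
by rewrite intrB /N intrM !rmorphXn pmulrn.
Qed.
Lemma act_X (O : comNzRingType) (gam : 'M[int]_2) (mm : 'X_{1..2}) :
  act gam ('X_[mm] : {mpoly O[2]}) =
     ((gam 1 1)%:~R *: 'X_0 - (gam 1 0)%:~R *: 'X_1) ^+ mm ord0 *
      (- ((gam 0 1)%:~R *: 'X_0) + (gam 0 0)%:~R *: 'X_1) ^+ mm ord_max.
Proof.
rewrite /act comp_mpolyX !big_ord_recl big_ord0 mulr1.
by congr (_ * _ ^+ mm _); apply: val_inj.
Qed.

Lemma Dw_powB (O : comNzRingType) p (w : nat -> nat) (A B : {mpoly O[2]}) n :
  (forall i j, w (i + j) <= w i)%N -> (forall i j, w (i + j) <= w j)%N ->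
  Dw p w (A - B) -> Dw p w (A ^+ n - B ^+ n).
Proof.
move=> h1 h2 hAB; elim: n => [|n IH]; first by rewrite !expr0 subrr; apply: Dw0.
have -> : A ^+ n.+1 - B ^+ n.+1 = (A ^+ n - B ^+ n) * A + B ^+ n * (A - B).
  by rewrite !exprSr mulrBl mulrBr addrA subrK.
apply: DwD.
  exact: (DwM (w1 := w) (w2 := fun _ => 0%N) ltac:(move=> i j; rewrite addn0; exact: h1) IH (Dw_any _ _)).
exact: (DwM (w1 := fun _ => 0%N) (w2 := w) ltac:(move=> i j; exact: h2) (Dw_any _ _) hAB).
Qed.

Lemma mXY_split m n : mXY m n = (U_(0%R : 'I_2) *+ m + U_(1%R : 'I_2) *+ n)%MM.
Proof.
apply/mnmP => -[[|[|i]] Hi] //=; rewrite mnmDE !mulmnE !mnm1E //.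
- have -> : Ordinal Hi = ord0 by apply: val_inj.
  by rewrite mXY0 /= mul1n mul0n addn0.
- have -> : Ordinal Hi = ord_max by apply: val_inj.
  by rewrite mXY1 /= mul1n mul0n.
Qed.

Lemma mXY_splitl m n : mXY m n = (U_(0%R : 'I_2) *+ m + mXY 0 n)%MM.
Proof.
apply/mnmP => -[[|[|i]] Hi] //=; rewrite mnmDE !mulmnE !mnm1E //.
- have -> : Ordinal Hi = ord0 by apply: val_inj.
  by rewrite !mXY0 /= mul1n addn0.
Qed.

Lemma actM_coef (O : comNzRingType) p (gam : 'M[int]_2) m n :
  S0 p gam ->
  pdivs p 1 ((act gam (monXY O m n))@_(mXY m n) - (gam 1 1)%:~R ^+ m * (gam 0 0)%:~R ^+ n).
Proof.
move=> [_ hc _]; rewrite /monXY act_X mXY0 mXY1.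
set d : O := (gam 1 1)%:~R; set c : O := (gam 1 0)%:~R.
set b : O := (gam 0 1)%:~R; set a : O := (gam 0 0)%:~R.
set L1 : {mpoly O[2]} := d *: 'X_0 - c *: 'X_1.
set L2 : {mpoly O[2]} := - (b *: 'X_0) + a *: 'X_1.
set A1 : {mpoly O[2]} := d *: 'X_0.
set A2 : {mpoly O[2]} := a *: 'X_1.
have pc : pdivs p 1 c by apply: pd_int.
have E1 : Dw p (fun _ => 1%N) (L1 ^+ m - A1 ^+ m).
  apply: Dw_powB => //.
  rewrite /L1 /A1 addrAC subrr add0r; apply: DwN; exact: Dw_Xc.
have E2 : Dw p (fun i => 1 - i)%N (L2 ^+ n - A2 ^+ n).
  apply: Dw_powB; [move=> *; lia | move=> *; lia |].
  rewrite /L2 /A2 addrK; apply: DwN; exact: Dw_X0.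
have -> : L1 ^+ m * L2 ^+ n = A1 ^+ m * A2 ^+ n + A1 ^+ m * (L2 ^+ n - A2 ^+ n)
     + (L1 ^+ m - A1 ^+ m) * L2 ^+ n.
  by ring.
rewrite !mcoeffD.
have -> : forall x y z w : O, x + y + z - w = (x - w) + y + z by move=> *; ring.
apply: pdD; last first.
  exact: (DwM (w := fun _ => 1%N) (w1 := fun _ => 1%N) (w2 := fun _ => 0%N)
          ltac:(move=> *; lia) E1 (Dw_any _ _)).
apply: pdD; last first.
  rewrite /A1 exprZn -scalerAl mcoeffZ; apply: pdMl.
  rewrite mulrC mpolyXn mXY_splitl mcoeffMX.
  by have := E2 (mXY 0 n); rewrite mXY0.
rewrite /A1 /A2 !exprZn -scalerAl -scalerAr scalerA mcoeffZ !mpolyXn -mpolyXD.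
by rewrite -mXY_split mcoeffX eqxx mulr1 subrr; apply: pd0.
Qed.
Definition phi (O : idomainType) p g r s (P : {mpoly O[2]}) : O :=
  epsilon (inhabits (0 : O)) (fun z => coefXY g (r - s) P = (p%:R : O) ^+ s * z).

Lemma phi_eq (O : idomainType) p g r s (P : {mpoly O[2]}) z :
  (p%:R : O) != 0 -> coefXY g (r - s) P = (p%:R : O) ^+ s * z -> phi p g r s P = z.
Proof.
move=> pnz E.
have := epsilon_spec (inhabits (0 : O)) (fun z => coefXY g (r - s) P = (p%:R : O) ^+ s * z)
  (ex_intro _ z E).
rewrite -/(phi p g r s P) E => /mulfI -> //.
exact: expf_neq0.
Qed.

Lemma phi_spec (O : idomainType) p g r s (P : {mpoly O[2]}) :
  (s <= r)%N -> Filrs p g r s P -> coefXY g (r - s) P = (p%:R : O) ^+ s * phi p g r s P.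
Proof.
move=> sr [[_ h1] _].
apply: (epsilon_spec (inhabits (0 : O)) (fun z => coefXY g (r - s) P = (p%:R : O) ^+ s * z)).
case: (posnP s) => [s0|s0].
  by exists (coefXY g (r - s) P); rewrite s0 expr0 mul1r.
have := h1 (r - s)%N ltac:(lia); rewrite subKn //.
Qed.

Lemma wt_S r s j : (s <= r)%N -> j != (r - s)%N -> wt r s.+1 j = wt r s j.
Proof.
move=> sr /eqP ne; rewrite /wt; case: (leqP j r); case: (leqP (r.+1 - s.+1) j);
  case: (leqP (r.+1 - s) j); lia.
Qed.

Lemma Filrs_M (O : comNzRingType) p g r s : (s <= r)%N -> (r <= g)%N ->
  Filrs p g r s ((p%:R : O) ^+ s *: monXY O (r - s) (g - r + s)).
Proof.
move=> sr rg; apply/Filrs_Dw; split.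
  by apply: dhomogZ; rewrite dhomogX; apply/eqP; apply: (etrans (mXY_deg _ _)); lia.
move=> m; rewrite mcoeffZ mcoeffX; case: eqP => [<-|_]; last first.
  by rewrite mulr0; apply: pd0.
rewrite mulr1 mXY0 /wt; case: (leqP (r - s) r) => h; last lia.
case: (leqP (r.+1 - s) (r - s)) => h'; first lia.
by rewrite subKn //; apply: pd_pow.
Qed.

Lemma gen (O : idomainType) p g r s (P : {mpoly O[2]}) :
  (s <= r)%N -> (r <= g)%N -> (p%:R : O) != 0 -> Filrs p g r s P ->
  Filrs p g r s.+1 (P - phi p g r s P *: ((p%:R : O) ^+ s *: monXY O (r - s) (g - r + s))).
Proof.
move=> sr rg pnz hP; have hc := phi_spec sr hP.
have hM := Filrs_M O p sr rg.
move/Filrs_Dw: (hP) => [homP DP]; move/Filrs_Dw: (hM) => [homM _].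
apply/Filrs_Dw; split.
  by apply: dhomogD => //; rewrite dhomogN; apply: dhomogZ.
move=> m; rewrite mcoeffB !mcoeffZ mcoeffX.
have gE : (g - (r - s) = g - r + s)%N by lia.
case: eqP => [<-|ne].
  move: hc; rewrite /coefXY gE => ->.
  by rewrite mulr1 mulrC subrr; apply: pd0.
rewrite mulr0 mulr0 subr0.
have [z|nz] := eqVneq P@_m 0; first by rewrite z; apply: pd0.
have [E _] := supp_mXY homP nz.
have nm : m ord0 != (r - s)%N.
  apply/eqP => e; apply: ne; rewrite E e gE //.
by rewrite wt_S //; apply: DP.
Qed.
Theorem lemma6p6 (p : nat) (O : idomainType) (g r s : nat) :
  prime p -> odd p -> is_ring_of_integers_padic p O ->
  (s <= r)%N -> (r <= g)%N ->
  (* (1) stability of Fil^{r,s} under S_0(p) *)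
  (forall (gam : 'M[int]_2) (P : {mpoly O[2]}),
      S0 p gam -> Filrs p g r s P -> Filrs p g r s (act gam P))
  /\
  (* (2) an S_0(p)-equivariant O-linear isomorphism
         Fil^{r,s}/Fil^{r,s+1} ~= (O/pO(a^(g-2r+2s)))(r-s),
         given as a map phi : Fil^{r,s} -> O read modulo p *)
  (exists phi : {mpoly O[2]} -> O,
     [/\ (* O-linear modulo p on Fil^{r,s} *)
         (forall (x : O) (P Q : {mpoly O[2]}), Filrs p g r s P -> Filrs p g r s Q ->
            congp p (phi (x *: P + Q)) (x * phi P + phi Q)),
         (* kernel is exactly Fil^{r,s+1} *)
         (forall P : {mpoly O[2]}, Filrs p g r s P ->
            (congp p (phi P) 0 <-> Filrs p g r s.+1 P)),
         (* surjective onto O/pO *)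
         (forall y : O, exists P : {mpoly O[2]}, Filrs p g r s P /\ congp p (phi P) y)
       & (* S_0(p)-equivariant: gam acts on the target by det(gam)^(r-s) a^(g-2r+2s) *)
         (forall (gam : 'M[int]_2) (P : {mpoly O[2]}), S0 p gam -> Filrs p g r s P ->
            congp p (phi (act gam P))
              ((chi_val p (r - s) (g%:Z - 2 * r%:Z + 2 * s%:Z) gam)%:R * phi P))])
  /\
  (* the quotient is generated by the image of p^s X^(r-s) Y^(g-r+s) *)
  (Filrs p g r s ((p%:R : O) ^+ s *: monXY O (r - s) (g - r + s)) /\
   forall P : {mpoly O[2]}, Filrs p g r s P ->
     exists x : O, Filrs p g r s.+1 (P - x *: ((p%:R : O) ^+ s *: monXY O (r - s) (g - r + s)))).
Proof.
move=> pp _ [pi [_ _ [ch0 _] _ _]] sr rg.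
have pnz : (p%:R : O) != 0 := ch0 p (prime_gt0 pp).
have gE : (g - (r - s) = g - r + s)%N by lia.
split; first by move=> gam P hS hP; exact: act_Filrs.
split.
  exists (phi p g r s); split.
  - move=> x P Q hP hQ.
    rewrite (@phi_eq _ _ _ _ _ _ (x * phi p g r s P + phi p g r s Q)) //.
      by rewrite /congp subrr; apply: pd0.
    have hcP := phi_spec sr hP; have hcQ := phi_spec sr hQ.
    rewrite /coefXY in hcP hcQ *.
    by rewrite mcoeffD mcoeffZ hcP hcQ; ring.
  - move=> P hP; have hc := phi_spec sr hP; split.
    + move=> [z hz]; rewrite subr0 expr1 in hz.
      split; first exact: hP.1.
      move=> j h1 h2; case: (eqVneq j (r - s)%N) => [->|ne].
        exists z; rewrite hc hz subKn // exprSr; ring.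
      by apply: hP.2 => //; lia.
    + move=> [_ h]; have := h (r - s)%N ltac:(lia) (leq_subr _ _).
      rewrite hc subKn // => -[k hk].
      exists k; rewrite subr0 expr1.
      apply: (mulfI (expf_neq0 s pnz)); rewrite hk exprSr; ring.
  - move=> y; exists (y *: ((p%:R : O) ^+ s *: monXY O (r - s) (g - r + s))).
    have hM := Filrs_M O p sr rg.
    split.
      move/Filrs_Dw: hM => [hh hD]; apply/Filrs_Dw; split.
        exact: dhomogZ.
      exact: DwZ.
    rewrite (@phi_eq _ _ _ _ _ _ y) //; first by rewrite /congp subrr; apply: pd0.
    by rewrite /coefXY gE !mcoeffZ mcoeffX eqxx mulr1 mulrC.
  - move=> gam P hS hP.
    set M := monXY O (r - s) (g - r + s).
    set Z := phi p g r s P *: ((p%:R : O) ^+ s *: M).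
    have hg := gen sr rg pnz hP; rewrite -/M -/Z in hg.
    have ha := act_Filrs hS hg.
    have [k hk] : pdivs p s.+1 (coefXY g (r - s) (act gam (P - Z))).
      by have := ha.2 (r - s)%N ltac:(lia) (leq_subr _ _); rewrite subKn.
    have [t ht] := actM_coef O (r - s)%N (g - r + s)%N hS.
    rewrite -/M expr1 in ht.
    have [u hu] := chi_cong O pp hS sr rg; rewrite expr1 in hu.
    have eact : act gam P = act gam (P - Z) + phi p g r s P *: ((p%:R : O) ^+ s *: act gam M).
      by rewrite /Z /act -!comp_mpolyZ -raddfD subrK.
    set c := chi_val _ _ _ _ in hu *.
    rewrite (@phi_eq _ _ _ _ _ _ (p%:R * k + phi p g r s P *
          ((gam 1 1)%:~R ^+ (r - s) * (gam 0 0)%:~R ^+ (g - r + s) + p%:R * t))) //.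
      exists (k + phi p g r s P * t - phi p g r s P * u); rewrite expr1.
      have -> : c%:R = (p%:R * u + (gam 1 1)%:~R ^+ (r - s) * (gam 0 0)%:~R ^+ (g - r + s) : O).
        by rewrite -hu subrK.
      ring.
    rewrite eact /coefXY mcoeffD !mcoeffZ -/(coefXY g (r - s) (act gam (P - Z))) hk.
    rewrite gE.
    have -> : (act gam M)@_(mXY (r - s) (g - r + s)) =
      (gam 1 1)%:~R ^+ (r - s) * (gam 0 0)%:~R ^+ (g - r + s) + p%:R * t by rewrite -ht addrC subrK.
    rewrite exprSr; ring.
split; first exact: Filrs_M.
move=> P hP; exists (phi p g r s P); exact: gen.
Qed.
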